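(* For any networked common goods game in which the utility function $U_j$ of every agent $a_j$ is increasing, concave and differentiable, a pure strategy Nash equilibrium exists.
   Context: A networked common goods game (NCGG) is given by a finite bipartite graph $G=(P,A,E)$ with goods $P=\{p_1,\dots,p_n\}$ and agents $A=\{a_1,\dots,a_m\}$ (an edge $(p_i,a_j)\in E$ means agent $a_j$ is entitled to good $p_i$), ground levels $\alpha_i\ge 0$ for each good $p_i$, and for each agent $a_j$ a utility function $U_j:[0,\infty)\to\mathbb{R}$ with $U_j(0)=0$. $N(v)$ denotes the set of neighbours of a vertex $v$. Each agent owns one unit of a divisible resource; a strategy of $a_j$ is a vector $(x_{ij})_{p_i\in N(a_j)}$ with $x_{ij}\ge 0$ and $\sum_{p_i\in N(a_j)}x_{ij}\le 1$. For a strategy profile, the total resource of good $p_i$ is $W_i=\alpha_i+\sum_{a_k\in N(p_i)}x_{ik}$, and the payoff of $a_j$ is $\sum_{p_i\in N(a_j)}U_j(W_i)$. A pure strategy Nash equilibrium is a profile in which no agent can strictly increase her payoff by unilaterally changing her strategy. *)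

(* Defs.v *)
From HB Require Import structures.
From mathcomp Require Import all_boot all_order all_algebra.
From mathcomp Require Import all_classical all_reals all_analysis.
Set Implicit Arguments. Unset Strict Implicit. Unset Printing Implicit Defensive.
Import Order.TTheory GRing.Theory Num.Theory.
Import numFieldNormedType.Exports.
Local Open Scope classical_set_scope.
Local Open Scope ring_scope.

(* Goods: finType P, agents: finType A, bipartite edge relation
   E : P -> A -> bool (E i j  <->  agent a_j is entitled to good p_i).  Utilities U : A -> R -> R (only values on
   [0, +oo) are relevant; see the hypotheses of the theorem).
   A strategy of agent j is represented as a function s : P -> R vanishing
   outside N(a_j); a strategy profile is x : A -> P -> R. *)

Section NCGG.
Variables (R : realType) (P A : finType) (E : P -> A -> bool).
Variables (alpha : P -> R) (U : A -> R -> R).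

Definition is_strategy (j : A) (s : P -> R) : Prop :=
  [/\ forall i, 0 <= s i,
      forall i, ~~ E i j -> s i = 0
    & \sum_(i | E i j) s i <= 1].

Definition is_profile (x : A -> P -> R) : Prop :=
  forall j, is_strategy j (x j).

Definition total_resource (x : A -> P -> R) (i : P) : R :=
  alpha i + \sum_(k | E i k) x k i.

Definition payoff (x : A -> P -> R) (j : A) : R :=
  \sum_(i | E i j) U j (total_resource x i).

Definition deviate (x : A -> P -> R) (j : A) (s : P -> R) : A -> P -> R :=
  fun k => if k == j then s else x k.

Definition pure_nash_equilibrium (x : A -> P -> R) : Prop :=
  is_profile x /\
  forall j s, is_strategy j s -> payoff (deviate x j s) j <= payoff x j.

End NCGG.

Definition increasing_on_nonneg (R : realType) (u : R -> R) : Prop :=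
  forall x y : R, 0 <= x -> x < y -> u x < u y.

Definition concave_on_nonneg (R : realType) (u : R -> R) : Prop :=
  forall (x y t : R), 0 <= x -> 0 <= y -> 0 <= t -> t <= 1 ->
    t * u x + (1 - t) * u y <= u (t * x + (1 - t) * y).

Definition differentiable_on_nonneg (R : realType) (u : R -> R) : Prop :=
  (forall x : R, 0 < x -> derivable u x 1) /\
  cvg ((fun h : R => h^-1 * (u h - u 0)) @ 0^'+).

(* Main.v *)
Require Import Defs.
From mathcomp Require Import all_boot all_order all_algebra.
From mathcomp Require Import all_classical all_reals all_analysis.
From mathcomp Require Import ring lra.
Set Implicit Arguments. Unset Strict Implicit. Unset Printing Implicit Defensive.
Import Order.TTheory GRing.Theory Num.Theory.
Import numFieldNormedType.Exports.
Local Open Scope classical_set_scope.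
Local Open Scope ring_scope.

Section Conc.
Variables (R : realType) (u : R -> R).
Hypothesis conc : concave_on_nonneg u.

Lemma concK x y z : 0 <= x -> x < y -> y < z ->
  (z - y) * u x + (y - x) * u z <= (z - x) * u y.
Proof.
move=> x0 xy yz.
have zx : 0 < z - x by lra.
pose t := (z - y) / (z - x).
have t0 : 0 <= t by rewrite /t divr_ge0 //; lra.
have t1 : t <= 1 by rewrite /t ler_pdivrMr //; lra.
have := @conc x z t x0 (ltW (le_lt_trans x0 (lt_trans xy yz))) t0 t1 : _ <= u (t * x + (1 - t) * z).
have -> : t * x + (1 - t) * z = y.
  rewrite /t; field; lra.
move=> H.
have -> : (z - y) * u x + (y - x) * u z = (z - x) * (t * u x + (1 - t) * u z).
  rewrite /t; field; lra.
by rewrite ler_pM2l.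
Qed.

Definition sl a b := (u b - u a) / (b - a).

Lemma slE a b : a != b -> u b - u a = sl a b * (b - a).
Proof. by move=> ab; rewrite /sl divfK // subr_eq0 eq_sym. Qed.

Lemma K1 x y z : 0 <= x -> x < y -> y < z -> sl x z <= sl x y.
Proof.
move=> x0 xy yz; have := @concK x y z x0 xy yz => H.
rewrite /sl ler_pdivrMr; last lra.
rewrite mulrAC ler_pdivlMr; last lra.
nra.
Qed.

Lemma K2 x y z : 0 <= x -> x < y -> y < z -> sl y z <= sl x z.
Proof.
move=> x0 xy yz; have := @concK x y z x0 xy yz => H.
rewrite /sl ler_pdivrMr; last lra.
rewrite mulrAC ler_pdivlMr; last lra.
nra.
Qed.
End Conc.
Arguments sl {R}.
Section Conc2.
Variables (R : realType) (u : R -> R).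
Hypothesis conc : concave_on_nonneg u.
Hypothesis inc : increasing_on_nonneg u.

Lemma sl_ge0 a b : 0 <= a -> a < b -> 0 <= sl u a b.
Proof.
move=> a0 ab; rewrite /sl divr_ge0 // subr_ge0; last exact: ltW.
exact/ltW/inc.
Qed.

Lemma per_term y0 m W d : 0 <= y0 -> y0 < m ->
  (0 <= d -> m <= W) -> (d < 0 -> W = m /\ 0 <= m + d <= y0) ->
  u (W + d) - u W <= sl u y0 m * d.
Proof.
move=> y00 y0m Hp Hn.
case: (ltgtP d 0) => [dn|dp|->]; last by rewrite addr0 subrr mulr0.
- have [-> /andP[md0 mdy]] := Hn dn.
  have -> : u (m + d) - u m = sl u (m + d) m * d.
    rewrite /sl; field; apply/eqP; lra.
  rewrite ler_wnM2r //; first exact: ltW.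
  case: (eqVneq (m + d) y0) => [->//|ne].
  have h : m + d < y0 by rewrite lt_neqAle ne mdy.
  exact: K2.
- have mW := Hp (ltW dp).
  have y0W : y0 < W by lra.
  rewrite (@slE _ u W (W + d)); last by apply/eqP; lra.
  rewrite (_ : W + d - W = d); last ring.
  rewrite ler_wpM2r //; first exact: ltW.
  apply: (le_trans (@K2 _ u conc y0 W (W + d) y00 y0W _)); first lra.
  apply: (le_trans (@K1 _ u conc y0 W (W + d) y00 y0W _)); first lra.
  case: (eqVneq m W) => [->//|ne].
  have h : m < W by rewrite lt_neqAle ne mW.
  exact: K1.
Qed.
End Conc2.

Lemma exists_min (R : realType) (I : finType) (Q : pred I) (f : I -> R) i0 :
  Q i0 -> exists i, Q i /\ forall k, Q k -> f i <= f k.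
Proof. by move=> Qi0; case: (arg_minP f Qi0) => i Qi H; exists i. Qed.
Section Exist.
Import ArrowAsProduct.
Variables (R : realType) (P A : finType) (E : P -> A -> bool) (alpha : P -> R).

Definition vW (v : A * P -> R) (i : P) := alpha i + \sum_(k | E i k) v (k, i).
Definition Phi (v : A * P -> R) := \sum_i (vW v i) ^+ 2.
Definition budget (k : A) : R := if [exists i, E i k] then 1 else 0.
Definition feas (v : A * P -> R) :=
  [/\ forall p, 0 <= v p, forall p, ~~ E p.2 p.1 -> v p = 0
    & forall k, \sum_(i | E i k) v (k, i) = budget k].

Lemma cont_sum (T : topologicalType) (I : eqType) (s : seq I) (Q : pred I) (f : I -> T -> R) :
  (forall i, continuous (f i)) -> continuous (fun t => \sum_(i <- s | Q i) f i t).
Proof.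
move=> cf; elim: s => [|a s IH].
  under eq_fun do rewrite big_nil; exact: cst_continuous.
under eq_fun do rewrite big_cons.
case: (Q a) => //= t.
apply: (continuousD (f := f a) (g := fun t => \sum_(i <- s | Q i) f i t)); [exact: cf | exact: IH].
Qed.

Lemma proj_cont (p : A * P) : continuous (fun v : A * P -> R => v p).
Proof. exact: (@proj_continuous _ (fun _ => R) p). Qed.

Lemma vW_cont i : continuous (fun v => vW v i).
Proof.
move=> t; apply: (continuousD (f := fun _ => alpha i)
   (g := fun v : A * P -> R => \sum_(k | E i k) v (k, i))).
  exact: cst_continuous.
by apply: cont_sum => k; exact: proj_cont.
Qed.

Lemma Phi_cont : continuous Phi.
Proof.
apply: cont_sum => i t.
have -> : (fun v => vW v i ^+ 2) = (fun v => vW v i) \* (fun v => vW v i).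
  by apply: funext => v /=; rewrite expr2.
by apply: continuousM; exact: vW_cont.
Qed.

Lemma term_le_sum (I : finType) (Q : pred I) (f : I -> R) i :
  (forall j, 0 <= f j) -> Q i -> f i <= \sum_(j | Q j) f j.
Proof.
move=> f0 Qi; rewrite (bigD1 i) //= lerDl; apply: sumr_ge0 => j _; exact: f0.
Qed.

Lemma closed_forall (T : topologicalType) (I : Type) (F : I -> set T) :
  (forall i, closed (F i)) -> closed [set v | forall i, F i v].
Proof.
move=> cF.
have -> : [set v | forall i, F i v] = \bigcap_(i in setT) F i.
  by apply/seteqP; split=> v /= H i; [move=> _ |]; apply: H.
exact: closed_bigI.
Qed.

Lemma closed_pre (T : topologicalType) (f : T -> R) (D : set R) :
  continuous f -> closed D -> closed [set v | D (f v)].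
Proof.
move=> cf cD; apply: (@preimage_closed _ _ f D) => // x _; exact: cf.
Qed.

Lemma feas_closed : closed feas.
Proof.
have -> : feas = [set v | forall p, 0 <= v p] `&`
   [set v | forall p, ~~ E p.2 p.1 -> v p = 0] `&`
   [set v | forall k, \sum_(i | E i k) v (k, i) = budget k].
  apply: funext => v; apply: propext; split.
    by case=> a b c; split; first split.
  by case=> [[a b] c]; split.
apply: closedI; first apply: closedI.
- apply: closed_forall => p; apply: (@closed_pre _ (fun v : A * P -> R => v p) [set x | 0 <= x]).
    exact: proj_cont.
  exact: closed_ge.
- apply: closed_forall => p.
  apply: (@closed_pre _ (fun v : A * P -> R => v p) [set x | ~~ E p.2 p.1 -> x = 0]).
    exact: proj_cont.
  case: (E p.2 p.1).
    rewrite (_ : [set x : R | ~~ true -> x = 0] = setT); first exact: closedT.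
    by apply/seteqP; split.
  rewrite (_ : [set x : R | ~~ false -> x = 0] = [set x | x = 0]); first exact: closed_eq.
  by apply/seteqP; split => x /= H //; apply: H.
- apply: closed_forall => k.
  apply: (@closed_pre _ (fun v : A * P -> R => \sum_(i | E i k) v (k, i)) [set x | x = budget k]).
    by apply: cont_sum => i; exact: proj_cont.
  exact: closed_eq.
Qed.

Lemma feas_box v : feas v -> forall p, `[0, 1]%classic (v p).
Proof.
move=> [f0 fE fs] [k i] /=; rewrite in_itv /= f0 /=.
case Eik: (E i k); last by rewrite fE ?Eik.
have := fs k; rewrite /budget.
have -> : [exists i, E i k] by apply/existsP; exists i.
move=> <-; exact: (@term_le_sum _ (fun j => E j k) (fun j => v (k, j)) i).
Qed.

Lemma feas_compact : compact feas.
Proof.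
have box := @tychonoff _ (fun _ : A * P => R) (fun _ => `[0, 1]%classic)
  (fun _ => @segment_compact R 0 1).
apply: subclosed_compact feas_closed box _.
move=> v /feas_box; exact.
Qed.

Lemma feas_nonempty : feas !=set0.
Proof.
pose v (p : A * P) : R := if [pick i | E i p.1] is Some i then (if p.2 == i then 1 else 0) else 0.
exists v; split.
- by move=> [k i]; rewrite /v /=; case: pickP => // j _; case: eqP.
- move=> [k i] /= nE; rewrite /v /=; case: pickP => // j Ej.
  by case: eqP => // eij; move: nE; rewrite eij Ej.
- move=> k; rewrite /v /budget /=; case: pickP => [j Ej|nE].
    have -> : [exists i, E i k] by apply/existsP; exists j.
    rewrite (bigD1 j) //= eqxx big1 ?addr0 // => i /andP[_ /negbTE ->] //.
  have -> : [exists i, E i k] = false by apply/negbTE/existsPn => i; rewrite nE.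
  by rewrite big1 // => i; rewrite nE.
Qed.

Lemma minimizer : exists2 c, feas c & forall t, feas t -> Phi c <= Phi t.
Proof.
have cP : {within feas, continuous Phi}.
  by apply: continuous_subspaceT; exact: Phi_cont.
have [c cin cmin] := compact_EVT_min feas_nonempty feas_compact cP.
exists c; first by move: cin; rewrite inE.
by move=> t tf; apply: cmin; rewrite inE.
Qed.

Definition ind (q p : A * P) : R := if p == q then 1 else 0.

Lemma sum_ind_k j l0 k : E l0 j ->
  \sum_(l | E l k) ind (j, l0) (k, l) = if k == j then 1 else 0.
Proof.
move=> Ej; rewrite /ind; case: (eqVneq k j) => [->|kj].
  rewrite (bigD1 l0) //= eqxx big1 ?addr0 // => l /andP[_ ll0].
  by rewrite xpair_eqE eqxx (negbTE ll0).
by rewrite big1 // => l _; rewrite xpair_eqE (negbTE kj).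
Qed.

Lemma sum_ind_l j l0 l : E l0 j ->
  \sum_(k | E l k) ind (j, l0) (k, l) = if l == l0 then 1 else 0.
Proof.
move=> Ej; rewrite /ind; case: (eqVneq l l0) => [->|ll0].
  rewrite (bigD1 j) //= eqxx big1 ?addr0 // => k /andP[_ kj].
  by rewrite xpair_eqE (negbTE kj).
by rewrite big1 // => k _; rewrite xpair_eqE (negbTE ll0) andbF.
Qed.

Lemma minimizer_prop c : feas c -> (forall t, feas t -> Phi c <= Phi t) ->
  forall j i i', E i j -> E i' j -> 0 < c (j, i) -> vW c i <= vW c i'.
Proof.
move=> [c0 cE cs] cmin j i i' Eij Ei'j cpos.
rewrite leNgt; apply/negP => Wlt.
have ii' : i != i'.
  by apply/eqP => eii; move: Wlt; rewrite eii ltxx.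
set d := Num.min (c (j, i)) ((vW c i - vW c i') / 2).
have d0 : 0 < d by rewrite lt_min cpos /= divr_gt0 // subr_gt0.
have d1 : d <= c (j, i) by rewrite ge_min lexx.
have d2 : d <= (vW c i - vW c i') / 2 by rewrite ge_min lexx orbT.
pose v p := c p + d * (ind (j, i') p - ind (j, i) p).
have sumk k : \sum_(l | E l k) v (k, l) = \sum_(l | E l k) c (k, l).
  rewrite /v big_split /= -mulr_sumr sumrB sum_ind_k // sum_ind_k //.
  by rewrite subrr mulr0 addr0.
have Wv l : vW v l = vW c l + d * ((if l == i' then 1 else 0) - (if l == i then 1 else 0)).
  rewrite /vW /v big_split /= -mulr_sumr sumrB sum_ind_l // sum_ind_l //.
  by rewrite addrA.
have fv : feas v.
  split.
  - move=> p; rewrite /v /ind.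
    case: (eqVneq p (j, i)) => [->|pi].
      rewrite (negbTE (_ : (j, i) != (j, i'))); last by rewrite xpair_eqE eqxx.
      lra.
    case: (p == (j, i')); have := c0 p; lra.
  - move=> p nE; rewrite /v /ind.
    have pi : p != (j, i) by apply: contraNneq nE => ->.
    have pi' : p != (j, i') by apply: contraNneq nE => ->.
    by rewrite (negbTE pi) (negbTE pi') cE // subrr mulr0 addr0.
  - by move=> k; rewrite sumk.
have := cmin v fv.
have -> : Phi v = Phi c + 2 * d * (vW c i' - vW c i + d).
  have split_sum (f : P -> R) : \sum_l f l = f i + f i' + \sum_(l | (l != i) && (l != i')) f l.
    by rewrite (bigD1 i) //= (bigD1 i') 1?eq_sym //= addrA.
  rewrite /Phi !split_sum.
  rewrite (eq_bigr (fun l => vW c l ^+ 2)); last first.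
    move=> l /andP[li li']; rewrite Wv (negbTE li) (negbTE li').
    by rewrite subrr mulr0 addr0.
  rewrite !Wv eqxx (negbTE ii') eq_sym (negbTE ii') eqxx.
  ring.
have : 2 * d * (vW c i' - vW c i + d) < 0.
  rewrite pmulr_rlt0 ?mulr_gt0 //; lra.
lra.
Qed.

End Exist.

Close Scope classical_set_scope.

Theorem theorem4 (R : realType) (P A : finType) (E : P -> A -> bool)
    (alpha : P -> R) (U : A -> R -> R) :
  (forall i, 0 <= alpha i) ->
  (forall j, U j 0 = 0) ->
  (forall j, increasing_on_nonneg (U j)) ->
  (forall j, concave_on_nonneg (U j)) ->
  (forall j, differentiable_on_nonneg (U j)) ->
  exists x : A -> P -> R, pure_nash_equilibrium E alpha U x.
Proof.
move=> alpha0 _ Uinc Uconc _.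
have [c cf cmin] := minimizer E alpha.
have cprop := minimizer_prop cf cmin.
case: cf => [c0 cE cs].
pose x k i := c (k, i).
have budget1 k : budget R E k <= 1 by rewrite /budget; case: existsP.
have Wx i : total_resource E alpha x i = vW E alpha c i by [].
have xle i k : E i k -> x k i <= total_resource E alpha x i.
  move=> Eik; rewrite /total_resource.
  have := @term_le_sum R A (fun k => E i k) (fun k => x k i) k (fun k => c0 (k, i)) Eik.
  have := alpha0 i; lra.
exists x; split.
  move=> j; split.
  - by move=> i; exact: c0.
  - by move=> i nE; exact: (cE (j, i)).
  - by rewrite /x cs.
move=> j s [s0 sE ssum].
rewrite /payoff.
have Wdev i : E i j -> total_resource E alpha (deviate x j s) i
    = total_resource E alpha x i + (s i - x j i).
  move=> Eij; rewrite /total_resource (bigD1 j) //= [in RHS](bigD1 j) //=.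
  rewrite /deviate eqxx.
  rewrite (eq_bigr (fun k => x k i)); last by move=> k /andP[_ /negbTE ->].
  ring.
case: (boolP [exists l, E l j]) => [exE|nexE]; last first.
  have h : (fun l => E l j) =1 xpred0.
    by move=> l /=; apply/negP => Elj; move/existsPn: nexE => /(_ l); rewrite Elj.
  by rewrite !big_pred0.
have sx1 : \sum_(i | E i j) x j i = 1 by rewrite /x cs /budget exE.
have [i0 /andP[Ei0 xi0]] : exists i0, E i0 j && (0 < x j i0).
  case: (pickP (fun i => E i j && (0 < x j i))) => [i0 H|H]; first by exists i0.
  exfalso; have : \sum_(i | E i j) x j i <= 0.
    apply: sumr_le0 => i Eij; move: (H i); rewrite Eij /= => /negbT.
    by rewrite -leNgt.
  rewrite sx1; lra.
have m_pos : 0 < total_resource E alpha x i0 by have := xle i0 j Ei0; lra.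
set m := total_resource E alpha x i0 in m_pos *.
pose Q l := E l j && (s l < x j l).
have [y0 [y00 [y0m y0P]]] : exists y0, [/\ 0 <= y0, y0 < m &
   forall l, Q l -> m - (x j l - s l) <= y0].
  case: (pickP Q) => [l0 Ql0|nQ].
    have [l [Ql lmin]] := exists_min (fun l => x j l - s l) Ql0.
    move: (Ql) => /andP[El sl_lt].
    have Wl : total_resource E alpha x l = m.
      apply/eqP; rewrite eq_le; apply/andP; split.
        exact: (cprop j l i0 El Ei0 (le_lt_trans (s0 l) sl_lt)).
      exact: (cprop j i0 l Ei0 El xi0).
    exists (m - (x j l - s l)); split.
    - have := xle l j El; have := s0 l; rewrite Wl; lra.
    - lra.
    - move=> k Qk; have := lmin k Qk; lra.
  exists 0; split => // l; by rewrite nQ.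
have : \sum_(i | E i j) (U j (total_resource E alpha (deviate x j s) i)
        - U j (total_resource E alpha x i)) <= \sum_(i | E i j) sl (U j) y0 m * (s i - x j i).
  apply: ler_sum => l Elj; rewrite Wdev //.
  apply: per_term => //.
  - by move=> _; exact: (cprop j i0 l Ei0 Elj xi0).
  - move=> dn; have xl : 0 < x j l by have := s0 l; lra.
    have Wl : total_resource E alpha x l = m.
      apply/eqP; rewrite eq_le; apply/andP; split.
        exact: (cprop j l i0 Elj Ei0 xl).
      exact: (cprop j i0 l Ei0 Elj xi0).
    split => //.
    have := xle l j Elj; rewrite Wl => h.
    have := s0 l; have := y0P l; rewrite /Q Elj /= => h2 h3.
    have : s l < x j l by lra.
    move=> /h2 h4; apply/andP; split; lra.
move=> H.
have H2 : \sum_(i | E i j) sl (U j) y0 m * (s i - x j i) <= 0.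
  rewrite -mulr_sumr sumrB sx1; apply: mulr_ge0_le0; [exact: sl_ge0 | lra].
rewrite -subr_le0 -sumrB; exact: le_trans H H2.
Qed.
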